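(* Let a finitely generated group $\Gamma$ act freely and properly on a locally compact space $X$. Then the Hurder compactification $\tilde X$ is a $\Gamma$-equivariant compactification of $X$ (the action extends continuously) on whose corona $\partial_\Gamma X$ the group $\Gamma$ acts trivially, and it is the maximal such compactification: for every compactification $\bar X$ of $X$ to which the $\Gamma$-action extends continuously and such that every point of $\bar X\setminus X$ is fixed by $\Gamma$, the identity of $X$ extends to a continuous map $\tilde X\to\bar X$.
   Context: Fix a finite symmetric generating set $S$ of $\Gamma$ with word length $\|\cdot\|_S$. For a continuous $f:X\to\mathbb{R}$ and $R>0$, $\Gamma\text{-}var_R(f)(x)=\max\{|f(x)-f(\gamma x)|:\|\gamma\|_S\le R\}$. The Hurder compactification $\tilde X$ is the compactification of $X$ determined by the algebra of bounded continuous functions $f$ on $X$ such that for every $R>0$, $\Gamma\text{-}var_R(f)(x)\to 0$ as $x\to\infty$; its corona is $\partial_\Gamma X=\tilde X\setminus X$. *)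

(* Defs.v *)
From HB Require Import structures.
From mathcomp Require Import all_boot all_order all_algebra.
From mathcomp Require Import all_classical all_reals all_analysis.
Import Order.TTheory GRing.Theory Num.Theory.
Import numFieldNormedType.Exports.

Set Implicit Arguments.
Unset Strict Implicit.
Unset Printing Implicit Defensive.

Local Open Scope classical_set_scope.
Local Open Scope ring_scope.

Definition is_action (G : groupType) (T : Type) (a : G -> T -> T) : Prop :=
  (forall x, a 1%g x = x) /\ (forall g h x, a (g * h)%g x = a g (a h x)).

Definition continuous_action (G : groupType) (T : topologicalType)
    (a : G -> T -> T) : Prop :=
  is_action a /\ (forall g, continuous (a g)).

Definition free_action (G : groupType) (T : Type) (a : G -> T -> T) : Prop :=
  forall g x, a g x = x -> g = 1%g.

Definition proper_action (G : groupType) (T : topologicalType)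
    (a : G -> T -> T) : Prop :=
  forall K : set T, compact K ->
    finite_set [set g : G | (a g @` K) `&` K !=set0].

Definition word_prod (G : groupType) (w : seq G) : G :=
  foldr (fun s t => (s * t)%g) 1%g w.

Definition symmetric_generating (G : groupType) (S : seq G) : Prop :=
  (forall s, s \in S -> (s^-1)%g \in S) /\
  (forall g : G, exists w : seq G, all (fun s => s \in S) w /\ word_prod w = g).

(* ||g||_S <= r, where ||g||_S is the minimal length of a word in S
   representing g *)
Definition wordlen_le (R : realType) (G : groupType) (S : seq G) (r : R)
    (g : G) : Prop :=
  exists w : seq G,
    [/\ all (fun s => s \in S) w, word_prod w = g & (size w)%:R <= r].

Definition Gvar (R : realType) (G : groupType) (X : Type) (a : G -> X -> X)
    (S : seq G) (r : R) (f : X -> R) (x : X) : R :=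
  sup [set `|f x - f (a g x)| | g in [set g | wordlen_le S r g]].

Definition vanishes_at_infinity (R : realType) (X : topologicalType)
    (h : X -> R) : Prop :=
  forall e : R, 0 < e ->
    exists K : set X, compact K /\ (forall x, ~ K x -> `|h x| < e).

Definition bounded_continuous (R : realType) (X : topologicalType)
    (f : X -> R) : Prop :=
  continuous f /\ (exists M : R, forall x, `|f x| <= M).

Definition hurder_fun (R : realType) (G : groupType) (X : topologicalType)
    (a : G -> X -> X) (S : seq G) (f : X -> R) : Prop :=
  bounded_continuous f /\
  (forall r : R, 0 < r -> vanishes_at_infinity (Gvar a S r f)).

Definition compactification (X K : topologicalType) (j : X -> K) : Prop :=
  [/\ compact [set: K], hausdorff_space K, continuous j,
      injective j /\
      (forall U : set X, open U ->
         exists V : set K, open V /\ j @` U = V `&` range j)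
    & dense (range j)].

(* the compactification (K, j) is the one determined by the algebra A of
   bounded continuous functions on X: A is exactly the set of functions on X
   that extend continuously to K *)
Definition determined_by (R : realType) (X K : topologicalType) (j : X -> K)
    (A : (X -> R) -> Prop) : Prop :=
  forall f : X -> R, A f <-> exists g : K -> R, continuous g /\ f = g \o j.

Definition extends_action (G : groupType) (X K : topologicalType)
    (a : G -> X -> X) (j : X -> K) (b : G -> K -> K) : Prop :=
  continuous_action b /\ (forall g x, b g (j x) = j (a g x)).

Definition trivial_on_corona (G : groupType) (X K : topologicalType)
    (j : X -> K) (b : G -> K -> K) : Prop :=
  forall g y, ~ range j y -> b g y = y.

(* Main.v *)
Require Import Defs.
From HB Require Import structures.
From mathcomp Require Import all_boot all_order all_algebra.
From mathcomp Require Import all_classical all_reals all_analysis.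
From mathcomp Require Import ring lra.
Import Order.TTheory GRing.Theory Num.Theory.
Import numFieldNormedType.Exports.
Set Implicit Arguments.
Unset Strict Implicit.
Unset Printing Implicit Defensive.
Local Open Scope classical_set_scope.
Local Open Scope ring_scope.

Section Words.
Context (R : realType) (G : groupType) (S : seq G).
Hypothesis hS : symmetric_generating S.

Lemma word_prod_cat (w1 w2 : seq G) :
  word_prod (w1 ++ w2) = (word_prod w1 * word_prod w2)%g.
Proof.
elim: w1 => [|s w IH] /=; first by rewrite mul1g.
by rewrite IH mulgA.
Qed.

Lemma word_inv (w : seq G) : all (fun s => s \in S) w ->
  exists w', [/\ all (fun s => s \in S) w', word_prod w' = ((word_prod w)^-1)%g
    & size w' = size w].
Proof.
elim: w => [|s w IH] /=.
  by move=> _; exists [::]; split => //; rewrite invg1.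
move=> /andP[sS wS]; have [w' [w'S w'P w'sz]] := IH wS.
exists (w' ++ [:: s^-1]%g); split.
- by rewrite all_cat w'S /= (hS.1 _ sS).
- by rewrite word_prod_cat w'P /= mulg1 invgM.
- by rewrite size_cat w'sz addn1.
Qed.

Lemma wordlen_conj (r : R) (g h : G) (w : seq G) :
  all (fun s => s \in S) w -> word_prod w = g ->
  wordlen_le S r h -> wordlen_le S (r + 2 * (size w)%:R) (g * h * g^-1)%g.
Proof.
move=> wS wg [v [vS vh vsz]].
have [w' [w'S w'P w'sz]] := word_inv wS.
exists (w ++ v ++ w'); split.
- by rewrite !all_cat wS vS w'S.
- by rewrite !word_prod_cat wg vh w'P wg mulgA.
- rewrite !size_cat w'sz !natrD.
  by rewrite -[X in _ <= X]addrC mulr2n ?mul2r; lra.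
Qed.

Lemma wordlen_one (r : R) : 0 <= r -> wordlen_le S r 1%g.
Proof. by move=> r0; exists [::]; split. Qed.

Fixpoint words (n : nat) : seq (seq G) :=
  if n is n'.+1 then [::] :: [seq s :: w | s <- S, w <- words n']
  else [:: [::]].

Lemma words_spec (n : nat) (w : seq G) :
  all (fun s => s \in S) w -> (size w <= n)%N -> w \in words n.
Proof.
elim: n w => [|n IH] [|s w] //=.
move=> /andP[sS wS] szw; rewrite inE; apply/orP; right.
by apply: (allpairs_f (fun s w => s :: w)) => //; apply: IH.
Qed.

Definition gball (r : R) : seq G :=
  map (@word_prod G) (words (Num.trunc r).+1).

Lemma gball_spec (r : R) (g : G) : wordlen_le S r g -> g \in gball r.
Proof.
move=> [w [wS <- wsz]]; apply: map_f; apply: words_spec => //.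
have := truncnS_gt r; have := le_lt_trans wsz.
by move=> H /H; rewrite ltr_nat ltnS => /leqW.
Qed.

End Words.

Section Gvar.
Context (R : realType) (G : groupType) (X : topologicalType) (a : G -> X -> X) (S : seq G).

Lemma Gvar_ub (f : X -> R) (M : R) (r : R) (x : X) (g : G) :
  (forall y, `|f y| <= M) -> wordlen_le S r g ->
  `|f x - f (a g x)| <= Gvar a S r f x.
Proof.
move=> fM gr; apply: sup_upper_bound; last by exists g.
split; first by exists `|f x - f (a g x)|, g.
exists (M + M) => _ [h _ <-].
by apply: le_trans (ler_normB _ _) _; apply: lerD.
Qed.

Lemma Gvar_le (f : X -> R) (r c : R) (x : X) : 0 <= r ->
  (forall g, wordlen_le S r g -> `|f x - f (a g x)| <= c) ->
  Gvar a S r f x <= c.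
Proof.
move=> r0 H; apply: ge_sup.
  by exists `|f x - f (a 1%g x)|, 1%g => //; exists [::]; split.
by move=> _ [g gr <-]; apply: H.
Qed.

Lemma Gvar_ge0 (f : X -> R) (M : R) (r : R) (x : X) :
  (forall y, `|f y| <= M) -> 0 <= r -> 0 <= Gvar a S r f x.
Proof.
move=> fM r0; apply: le_trans (Gvar_ub x (g := 1%g) fM _) => //.
by exists [::]; split.
Qed.

End Gvar.

Section Hur.
Context (R : realType) (G : groupType) (X : topologicalType) (a : G -> X -> X) (S : seq G).
Hypothesis hS : symmetric_generating S.
Hypothesis hact : is_action a.
Hypothesis hcont : forall g, continuous (a g).

Definition cocompact (F : set_system X) := forall C, compact C -> F (~` C).

Lemma hurder_bounded (f : X -> R) : hurder_fun a S f -> exists M, forall y, `|f y| <= M.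
Proof. by case=> [[_ H] _]. Qed.

Lemma hurder_shift (f : X -> R) (g : G) (F : set_system X) :
  hurder_fun a S f -> Filter F -> cocompact F ->
  (fun x => f x - f (a g x)) @ F --> 0.
Proof.
move=> hf FF Fco.
have [M fM] := hurder_bounded hf.
have [w [wS wg]] := hS.2 g.
pose r : R := (size w)%:R + 1.
have r0 : 0 < r by rewrite /r ltr_wpDl.
have gr : wordlen_le S r g by exists w; split => //; rewrite /r lerDl.
apply/cvgrPdist_lt => e e0.
have [C [cC HC]] := hf.2 r r0 e e0.
apply: filterS (Fco C cC) => x nCx.
rewrite sub0r normrN; apply: le_lt_trans (HC x nCx).
  by apply: le_trans (Gvar_ub a x fM gr) (ler_norm _).
Qed.

Lemma hurder_comp (f : X -> R) (g : G) :
  hurder_fun a S f -> hurder_fun a S (f \o a g).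
Proof.
move=> hf; have [M fM] := hurder_bounded hf.
split.
  split; first by move=> x; apply: continuous_comp; [exact: hcont|exact: hf.1.1].
  by exists M => y /=.
move=> r r0 e e0.
have [w [wS wg]] := hS.2 g.
pose r' : R := r + 2 * (size w)%:R.
have r'0 : 0 < r' by rewrite /r' ltr_wpDr // mulr_ge0.
have [C [cC HC]] := hf.2 r' r'0 e e0.
exists (a (g^-1)%g @` C); split.
  by apply: continuous_compact => //; apply: continuous_subspaceT; exact: hcont.
move=> x nCx.
have nC : ~ C (a g x).
  move=> Cx; apply: nCx; exists (a g x) => //.
  by rewrite -hact.2 mulVg hact.1.
have G0 : 0 <= Gvar a S r (f \o a g) x.
  by apply: (Gvar_ge0 a S x (fun y => fM (a g y))); exact: ltW.
rewrite ger0_norm //; apply: le_lt_trans (HC _ nC).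
apply: le_trans (ler_norm _).
apply: Gvar_le; first exact: ltW.
move=> h hr /=.
have -> : a g (a h x) = a (g * h * g^-1)%g (a g x).
  by rewrite -!hact.2 mulgVK.
exact: (Gvar_ub a _ fM (wordlen_conj hS wS wg hr)).
Qed.

Lemma hurder_of_pw (h : X -> R) : continuous h -> (exists M, forall x, `|h x| <= M) ->
  (forall g e, 0 < e -> exists C, compact C /\
     forall x, ~ C x -> `|h x - h (a g x)| < e) ->
  hurder_fun a S h.
Proof.
move=> hc [M hM] Hpw; split; first by split => //; exists M.
move=> r r0 e e0.
have e20 : 0 < e / 2 by rewrite divr_gt0.
have : forall l : seq G, exists C, compact C /\ forall g, g \in l ->
    forall x, ~ C x -> `|h x - h (a g x)| < e / 2.
  elim => [|g l [C [cC HC]]].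
    by exists set0; split => //; exact: compact0.
  have [C' [cC' HC']] := Hpw g _ e20.
  exists (C `|` C'); split; first exact: compactU.
  move=> g'; rewrite inE => /orP[/eqP ->|g'l] x nx.
    by apply: HC' => ?; apply: nx; right.
  by apply: HC => // ?; apply: nx; left.
move=> /(_ (gball S r)) [C [cC HC]].
exists C; split => // x nCx.
rewrite ger0_norm; last by apply: (Gvar_ge0 a S x hM); exact: ltW.
apply: le_lt_trans (_ : _ <= e / 2) _; last by rewrite ltr_pdivrMr //; lra.
apply: Gvar_le; first exact: ltW.
by move=> g gr; apply: ltW; apply: HC => //; exact: gball_spec.
Qed.

End Hur.

Section Top.
Context (R : realType).

Lemma crs_compact (L : topologicalType) :
  hausdorff_space L -> compact [set: L] -> completely_regular_space L.
Proof.
move=> hL cL; apply: (@normal_completely_regular R).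
  exact: compact_normal.
exact: hausdorff_accessible.
Qed.

Lemma sep_fun (L : topologicalType) : completely_regular_space L ->
  forall (z : L) (W : set L), open W -> W z ->
  exists h : L -> R, [/\ continuous h, h z = 0 & forall w, ~ W w -> h w = 1].
Proof.
move=> crs z W oW Wz.
have /(uniform_separatorP (R := R)) [h [hc _ h0 h1]] :=
  crs z (~` W) (open_closedC oW) (fun nW => nW Wz).
exists h; split => //.
  by apply: h0; exists z.
by move=> w nWw; apply: h1; exists w.
Qed.

Lemma sep_points (L : topologicalType) : hausdorff_space L -> completely_regular_space L ->
  forall z w : L, z <> w -> exists h : L -> R, continuous h /\ h z <> h w.
Proof.
move=> hL crs z w zw.
have cw : closed [set w] := accessible_closed_set1 (hausdorff_accessible hL) (x := w).
have [h [hc hz hw]] := sep_fun crs (closed_openC cw) zw.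
exists h; split => //; rewrite hz hw; first by apply/eqP; rewrite eq_sym oner_eq0.
by move=> /(_ erefl).
Qed.

Lemma compact_bound (L : topologicalType) (h : L -> R) :
  compact [set: L] -> continuous h -> exists M, forall z, `|h z| <= M.
Proof.
move=> cL hc.
have ci : compact (h @` setT).
  by apply: continuous_compact => //; apply: continuous_subspaceT.
have [M _ HM] := ex_strict_bound_gt0 (compact_bounded ci).
by exists M => z; apply: ltW; apply: HM; exists z.
Qed.

Lemma dense_unique (X K L : topologicalType) (j : X -> K) (u v : K -> L) :
  hausdorff_space L -> dense (range j) -> continuous u -> continuous v ->
  (forall x, u (j x) = v (j x)) -> forall y, u y = v y.
Proof.
move=> hL dj uc vc uv y; apply: hL => A B /= NA NB.
have : nbhs y (u @^-1` A `&` v @^-1` B).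
  by apply: filterI; [exact: uc|exact: vc].
rewrite nbhsE; case=> O [oO Oy] OAB.
have [z [Oz [x _ jxz]]] : O `&` range j !=set0 by apply: dj => //; exists y.
have Ojx : O (j x) by rewrite jxz.
have [Au Bv] := OAB _ Ojx.
by exists (u (j x)); split => //; rewrite uv.
Qed.

Definition embedding (X L : topologicalType) (k : X -> L) :=
  [/\ continuous k, injective k &
   forall U : set X, open U -> exists V : set L, open V /\ k @` U = V `&` range k].

Lemma embedding_compact_preimage (X L : topologicalType) (k : X -> L) (D : set L) :
  embedding k -> compact D -> D `<=` range k -> compact (k @^-1` D).
Proof.
move=> [kc kinj kopen] cD Dk F PF FD.
have [z [Dz clz]] := cD (k @ F) _ FD.
have [x0 _ kx0] := Dk z Dz.
exists x0; split; first by rewrite /= kx0.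
move=> P N FP /= Nx.
move: Nx; rewrite nbhsE; move=> -[U [oU Ux0] UN].
have [V [oV kUV]] := kopen U oU.
have Vz : V z.
  have : (k @` U) z by exists x0.
  by rewrite kUV => -[].
have FkP : F (k @^-1` (k @` P)).
  by apply: filterS FP => p Pp; exists p.
have [w [[p Pp <-] Vkp]] := clz _ _ FkP (open_nbhs_nbhs (conj oV Vz)).
have : (V `&` range k) (k p) by split => //; exists p.
rewrite -kUV => -[u Uu /kinj up].
by exists p; split => //; apply: UN; rewrite -up.
Qed.



Lemma ultra_fmap (T U : Type) (f : T -> U) (F : set_system T) :
  UltraFilter F -> UltraFilter (f @ F).
Proof.
move=> FU; split; first exact: fmap_proper_filter.
move=> G PG sFG; rewrite predeqE => B; split; last exact: sFG.
move=> GB; have [//|FnB] := in_ultra_setVsetC (f @^-1` B) FU.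
have GnB : G (~` B) by apply: sFG; rewrite /= preimage_setC.
by have /filter_ex [? []] : G (B `&` ~` B) by exact: filterI.
Qed.

Lemma dense_ultra (X K : topologicalType) (j : X -> K) (y : K) :
  dense (range j) -> exists U : set_system X, UltraFilter U /\ j @ U --> y.
Proof.
move=> dj.
pose Fy := filter_from (nbhs y) (fun V => j @^-1` V).
have FFy : Filter Fy.
  apply: filter_from_filter; first by exists setT; exact: filterT.
  move=> V W NV NW; exists (V `&` W); first exact: filterI.
  by [].
have PFy : ProperFilter Fy.
  apply: filter_from_proper => V; rewrite nbhsE; case=> O [oO Oy] OV.
  have [z [Oz [x _ jxz]]] : O `&` range j !=set0 by apply: dj => //; exists y.
  by exists x; apply: OV; rewrite /= jxz.
have [U [UU sFU]] := ultraFilterLemma PFy.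
exists U; split => // W NW; apply: sFU; exists W => //.
Qed.

Lemma ext_map (X K L : topologicalType) (j : X -> K) (k : X -> L)
    (A : (X -> R) -> Prop) :
  compact [set: K] -> dense (range j) ->
  (forall f, A f -> exists g : K -> R, continuous g /\ f = g \o j) ->
  hausdorff_space L -> compact [set: L] ->
  (forall h : L -> R, continuous h -> A (h \o k)) ->
  exists phi : K -> L, continuous phi /\ forall x, phi (j x) = k x.
Proof.
move=> cK dj det hL cL Ak.
have crsL := crs_compact hL cL.
have H : forall y : K, exists z : L, exists U : set_system X,
    [/\ UltraFilter U, j @ U --> y & k @ U --> z].
  move=> y; have [U [UU jU]] := dense_ultra y dj.
  have UkU : UltraFilter (k @ U) := ultra_fmap k UU.
  have := cL; rewrite compact_ultra => /(_ (k @ U) UkU (filterT)) [z [_ kz]].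
  by exists z, U; split.
have [phi Hphi] := choice H.
have P : forall h : L -> R, continuous h -> forall g : K -> R, continuous g ->
    h \o k = g \o j -> forall y, h (phi y) = g y.
  move=> h hc g gc hkgj y.
  have [U [UU jU kU]] := Hphi y.
  have PU : ProperFilter U by exact: ultra_proper.
  have c1 : (h \o k) @ U --> h (phi y).
    by apply: cvg_comp kU _; exact: hc.
  have c2 : (g \o j) @ U --> g y.
    by apply: cvg_comp jU _; exact: gc.
  rewrite hkgj in c1.
  exact: (norm_cvg_unique c1 c2).
have ext : forall h : L -> R, continuous h ->
    exists g : K -> R, continuous g /\ h \o k = g \o j.
  by move=> h hc; apply: det; exact: Ak.
exists phi; split; last first.
  move=> x; apply: contrapT => neq.
  have [h [hc hne]] := sep_points hL crsL neq.
  have [g [gc hg]] := ext h hc.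
  apply: hne; rewrite (P h hc g gc hg).
  by have := congr1 (fun f => f x) hg => /= ->.
move=> y W /=; rewrite nbhsE; case=> O [oO Oy] OW.
have [h [hc h0 h1]] := sep_fun crsL oO Oy.
have [g [gc hg]] := ext h hc.
have gy : g y = 0 by rewrite -(P h hc g gc hg).
have e0 : (0 : R) < 1 / 2 by lra.
have := (@cvgrPdist_lt _ _ _ _ (nbhs_filter y) g (g y)).1 (gc y) _ e0.
apply: filterS => y' /=; rewrite gy sub0r normrN.
rewrite -(P h hc g gc hg) => hlt.
apply: OW; apply: contrapT => nO.
by move: hlt; rewrite h1 // normr1; lra.
Qed.

End Top.


Section Main.
Context (R : realType) (G : groupType) (X : topologicalType) (a : G -> X -> X) (S : seq G).
Hypothesis hS : symmetric_generating S.
Hypothesis hact : is_action a.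
Hypothesis hcont : forall g, continuous (a g).

Local Notation A := (@hurder_fun R G X a S).

Lemma cocompact_ultra (K : topologicalType) (j : X -> K) (U : set_system X) (y : K) :
  hausdorff_space K -> continuous j -> UltraFilter U -> j @ U --> y -> ~ range j y ->
  cocompact U.
Proof.
move=> hK jc UU jU ny C cC.
have [UC|//] := in_ultra_setVsetC C UU; exfalso.
have cjC : compact (j @` C).
  by apply: continuous_compact => //; apply: continuous_subspaceT.
have cl : closure (j @` C) y.
  move=> B NB; have : U (C `&` j @^-1` B) by apply: filterI; [exact: UC | exact: (jU _ NB)].
  by move=> /filter_ex [x [Cx Bjx]]; exists (j x); split => //; exists x.
have [x _ jxy] := compact_closed hK cjC cl.
by apply: ny; exists x.
Qed.

Lemma part2 (K : topologicalType) (j : X -> K) :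
  compactification j -> determined_by j A ->
  exists b : G -> K -> K, extends_action a j b /\ trivial_on_corona j b.
Proof.
move=> [cK hK jc [jinj jemb] dj] det.
have Hb : forall g, exists phi : K -> K, continuous phi /\
    forall x, phi (j x) = (j \o a g) x.
  move=> g; apply: (@ext_map R X K K j (j \o a g) A cK dj _ hK cK).
    by move=> f /(det f).
  move=> h hc; have : A (h \o j) by apply/(det (h \o j)); exists h.
  by move/(hurder_comp hS hact hcont g).
have [b Hb'] := choice Hb.
have bc : forall g, continuous (b g) by move=> g; case: (Hb' g).
have bj : forall g x, b g (j x) = j (a g x) by move=> g x; case: (Hb' g) => _ ->.
exists b; split; first split; first split; first split.
- move=> y; have idc : continuous (fun z : K => z) by move=> z; exact: cvg_id.
  apply: (dense_unique hK dj (bc 1%g) idc) => x.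
  by rewrite bj hact.1.
- move=> g h y.
  have vc : continuous (b g \o b h).
    by move=> z; apply: continuous_comp; [exact: bc|exact: bc].
  apply: (dense_unique hK dj (bc (g * h)%g) vc) => x /=.
  by rewrite !bj hact.2.
- exact: bc.
- exact: bj.
move=> g y ny; apply: contrapT => ne.
have crsK := crs_compact R hK cK.
have [h [hc hne]] := sep_points R hK crsK ne.
have Af : A (h \o j) by apply/(det (h \o j)); exists h.
have [U [UU jU]] := dense_ultra y dj.
have PU : ProperFilter U by exact: ultra_proper.
have Uco := cocompact_ultra hK jc UU jU ny.
have c0 := hurder_shift hS g Af _ Uco.
have c1 : (h \o j) @ U --> h y by apply: cvg_comp jU _; exact: hc.
have c2 : (h \o j \o a g) @ U --> h (b g y).
  have -> : h \o j \o a g = h \o b g \o j.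
    by apply/funext => x /=; rewrite bj.
  apply: cvg_comp jU _; apply: continuous_comp; [exact: bc|exact: hc].
have c3 := cvgB c1 c2.
have FU : Filter U by exact: PU.
apply: hne; apply/eqP; rewrite -subr_eq0 -opprB oppr_eq0; apply/eqP.
exact: (norm_cvg_unique (c3 FU) (c0 FU)).
Qed.


Lemma part3 (K : topologicalType) (j : X -> K) :
  compactification j -> determined_by j A ->
  forall (L : topologicalType) (k : X -> L) (c : G -> L -> L),
    compactification k -> extends_action a k c -> trivial_on_corona k c ->
    exists phi : K -> L, continuous phi /\ (forall x, phi (j x) = k x).
Proof.
move=> [cK hK jc [jinj jemb] dj] det L k c [cL hL kc [kinj kemb] dk]
  [[_ cc] ck] ctriv.
apply: (@ext_map R X K L j k A cK dj _ hL cL).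
  by move=> f /(det f).
move=> h hc.
have [M hM] := compact_bound cL hc.
apply: (hurder_of_pw S).
- by move=> x; apply: continuous_comp; [exact: kc|exact: hc].
- by exists M => x; exact: hM.
move=> g e e0.
pose u := fun z : L => `|h z - h (c g z)|.
have uc : continuous u.
  move=> z; apply: cvg_norm.
  apply: cvgB; first exact: hc.
  by apply: continuous_comp; [exact: cc|exact: hc].
pose D := u @^-1` [set t | e <= t].
have cD : compact D.
  apply: (subclosed_compact _ cL) => //.
  by move: uc => /continuous_closedP; apply; exact: closed_ge.
have Dk : D `<=` range k.
  move=> z Dz; apply: contrapT => nz; move: Dz.
  by rewrite /D /u /= ctriv // subrr normr0 leNgt e0.
have emb : embedding k by split.
exists (k @^-1` D); split; first exact: embedding_compact_preimage.
move=> x nx /=; rewrite -ck.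
by move: nx; rewrite /D /u /= ltNge; apply: contra_notN.
Qed.

End Main.

Definition subsp {T : topologicalType} (A0 : set T) : topologicalType := set_type A0.

Section Subsp.
Context (T : topologicalType) (A0 : set T).

Lemma subsp_val_cont : continuous (set_val : subsp A0 -> T).
Proof. exact: initial_continuous. Qed.

Lemma subsp_open (O : set (subsp A0)) : open O ->
  exists W : set T, open W /\ set_val @^-1` W = O.
Proof. by move=> [W oW <-]; exists W. Qed.

Lemma subsp_nbhs (k : subsp A0) (N : set (subsp A0)) : nbhs k N ->
  exists W : set T, [/\ open W, W (set_val k) & set_val @^-1` W `<=` N].
Proof.
rewrite nbhsE; case=> O [oO Ok] ON.
have [W [oW WO]] := subsp_open oO.
exists W; split => //; first by move: Ok; rewrite -WO.
by rewrite WO.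
Qed.

Lemma subsp_cont_into (Y : topologicalType) (f : Y -> subsp A0) :
  continuous (set_val \o f) -> continuous f.
Proof.
move=> cf y N /subsp_nbhs [W [oW Wy WN]].
apply: (filterS (P := f @^-1` (set_val @^-1` W))).
  by move=> z; apply: WN.
by apply: cf; exact: open_nbhs_nbhs.
Qed.

Lemma subsp_hausdorff : hausdorff_space T -> hausdorff_space (subsp A0).
Proof.
move=> hT k1 k2 cl; apply: val_inj; apply: hT => B1 B2 N1 N2.
have M1 : nbhs k1 (set_val @^-1` B1) by exact: subsp_val_cont.
have M2 : nbhs k2 (set_val @^-1` B2) by exact: subsp_val_cont.
have [k [? ?]] := cl _ _ M1 M2.
by exists (set_val k).
Qed.

Lemma subsp_compact : compact A0 -> compact [set: subsp A0].
Proof.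
move=> cA F PF _.
have FA : (set_val @ F) A0.
  have E : set_val @^-1` A0 = [set: subsp A0].
    by apply/funext => k; apply/propext; split => // _; exact: set_valP.
  by rewrite /= E; exact: filterT.
have [p [Ap clp]] := cA _ _ FA.
exists (exist _ p (mem_set Ap)); split => //.
move=> Q N FQ /subsp_nbhs [W [oW Wp WN]].
have FQ' : F (set_val @^-1` (set_val @` Q)).
  by apply: filterS FQ => q Qq; exists q.
have [_ [[q Qq <-] Wq]] := clp _ _ FQ' (open_nbhs_nbhs (conj oW Wp)).
by exists q; split => //; apply: WN.
Qed.

End Subsp.

Lemma ultra_lim (T K : topologicalType) (U : set_system T) (u : T -> K) :
  compact [set: K] -> UltraFilter U -> exists q : K, u @ U --> q.
Proof.
move=> cK UU; have := cK; rewrite compact_ultra.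
move=> /(_ (u @ U) (ultra_fmap u UU) filterT) [q [_ uq]].
by exists q.
Qed.

Section Constr.
Context (R : realType) (G : groupType) (X : topologicalType) (a : G -> X -> X) (S : seq G).
Hypothesis hS : symmetric_generating S.
Hypothesis hact : is_action a.
Hypothesis hcont : forall g, continuous (a g).
Hypothesis hX : hausdorff_space X.
Hypothesis lcX : locally_compact [set: X].

Local Notation A := (@hurder_fun R G X a S).

Lemma sep_fun01 (L : topologicalType) : completely_regular_space L ->
  forall (z : L) (W : set L), open W -> W z ->
  exists h : L -> R, [/\ continuous h, h z = 0, forall w, ~ W w -> h w = 1
    & forall w, 0 <= h w <= 1].
Proof.
move=> crs z W oW Wz.
have /(uniform_separatorP (R := R)) [h [hc h01 h0 h1]] :=
  crs z (~` W) (open_closedC oW) (fun nW => nW Wz).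
exists h; split => //.
- by apply: h0; exists z.
- by move=> w nWw; apply: h1; exists w.
- by move=> w; have := h01 (h w) (ex_intro2 _ _ w I erefl); rewrite /= in_itv.
Qed.

Lemma bump (x : X) (U : set X) : open U -> U x ->
  exists phi : X -> R, [/\ A phi, phi x = 1 & forall y, ~ U y -> phi y = 0].
Proof.
move=> oU Ux.
have crsX := @locally_compact_completely_regular X R lcX hX.
have [B] := @lcX x I; rewrite withinET => Bx [cB clB].
have : nbhs x (U `&` B) by apply: filterI => //; exact: open_nbhs_nbhs.
rewrite nbhsE; case=> O [oO Ox] OUB.
have [h [hc h0 h1 h01]] := sep_fun01 crsX oO Ox.
exists (fun y => 1 - h y); split.
- apply: (hurder_of_pw S).
  + by move=> y; apply: cvgB; [exact: cvg_cst|exact: hc].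
  + exists 1 => y; have := h01 y; rewrite ler_norml => /andP[? ?].
    by apply/andP; split; lra.
  + move=> g e e0.
    exists (B `|` a (g^-1)%g @` B); split.
      apply: compactU => //; apply: continuous_compact => //.
      by apply: continuous_subspaceT; exact: hcont.
    move=> y ny.
    have nOy : ~ O y by move=> /OUB [_ By]; apply: ny; left.
    have nOgy : ~ O (a g y).
      move=> /OUB [_ Bgy]; apply: ny; right; exists (a g y) => //.
      by rewrite -hact.2 mulVg hact.1.
    by rewrite h1 // h1 // subrr normr0.
- by rewrite h0 subr0.
- by move=> y nUy; rewrite h1 ?subrr // => /OUB [].
Qed.

Local Notation I := {ptws X -> R}.
Local Notation PT := (prod_topology (fun _ : I => R)).

Lemma part1 : exists (K : topologicalType) (j : X -> K),
  compactification j /\ determined_by j A.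
Proof.
have Mex : forall f : I, exists m : R, 0 <= m /\ (A f -> forall x, `|f x| <= m).
  move=> f; have [Af|nAf] := pselect (A f).
    have [M HM] := hurder_bounded Af.
    by exists `|M|; split => // _ x; apply: le_trans (HM x) (ler_norm _).
  by exists 0; split.
have [M HM] := choice Mex.
pose Mb := fun f : I => if `[< A f >] then M f else 0.
pose e : X -> PT := fun x f => if `[< A f >] then f x else 0.
pose box := [set p : PT | forall f, (`[- Mb f, Mb f])%classic (p f)].
have cbox : compact box.
  have := @tychonoff I (fun _ => R) (fun f => (`[- Mb f, Mb f])%classic)
    (fun f => @segment_compact R _ _).
  exact.
have hP : hausdorff_space PT.
  have := @hausdorff_product I (fun _ => R) (fun _ => @norm_hausdorff _ _).
  exact.
have eA : forall f x, A f -> e x f = f x.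
  by move=> f x Af; rewrite /e (asboolT Af).
have ebox : forall x, box (e x).
  move=> x f; rewrite /= in_itv /= /e /Mb; case: asboolP => Af.
    by rewrite -ler_norml; exact: (HM f).2.
  by rewrite oppr0 lexx.
pose K0 := closure (range e).
have K0box : K0 `<=` box.
  move=> p Kp; apply: (compact_closed hP cbox) => B NB.
  have [_ [[x _ <-] Bex]] := Kp B NB.
  by exists (e x); split.
have cK0 : compact K0 := subclosed_compact (@closed_closure _ _) cbox K0box.
have eK : forall x, e x \in K0.
  by move=> x; apply/mem_set/subset_closure; exists x.
pose j : X -> subsp K0 := fun x => exist _ (e x) (eK x).
have ec : continuous e.
  move=> x; apply/pointwise_cvgP => f.
  suff H : (fun y => e y f) @ x --> e x f by exact: H.
  rewrite /e; case: asboolP => Af; [exact: Af.1.1 | exact: cvg_cst].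
have jc : continuous j by apply: subsp_cont_into; exact: ec.
have pic : forall f, continuous (fun k : subsp K0 => set_val k f).
  move=> f k.
  have h1 : (set_val : subsp K0 -> PT) @ k --> set_val k by apply: subsp_val_cont.
  have h2 := @proj_continuous I (fun _ => R) f (set_val k).
  exact: (cvg_comp _ _ h1 h2).
have pij : forall f x, A f -> set_val (j x) f = f x by move=> f x Af; exact: eA.
exists (subsp K0), j; split.
  split.
  - exact: subsp_compact.
  - exact: subsp_hausdorff.
  - exact: jc.
  - split.
      move=> x y jxy; apply: contrapT => xy.
      have cy : closed [set y] := accessible_closed_set1 (hausdorff_accessible hX) (x := y).
      have [phi [Aphi phix phiy]] := bump (closed_openC cy) xy.
      have := congr1 (fun k : subsp K0 => set_val k phi) jxy.
      rewrite /= !pij // phix phiy //; last by move=> /(_ erefl).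
      by move=> /eqP; rewrite oner_eq0.
    move=> U oU.
    pose W := [set p : PT | exists phi : I,
      [/\ A phi, (forall y, ~ U y -> phi y = 0) & 1 / 2 < p phi]].
    have oW : open W.
      rewrite openE => p [phi [Aphi phiU php]].
      have og : open [set t : R | 1 / 2 < t] by exact: open_gt.
      have N : nbhs (p phi) [set t : R | 1 / 2 < t].
        by apply: open_nbhs_nbhs; split.
      have N2 := @proj_continuous I (fun _ => R) phi p _ N.
      have N3 : nbhs p ((fun q : PT => q phi) @^-1` [set t : R | 1 / 2 < t]) := N2.
      have sub : (fun q : PT => q phi) @^-1` [set t : R | 1 / 2 < t] `<=` W.
        move=> q hq. exists phi. split. exact: Aphi. exact: phiU. exact: hq.
      exact: (filterS sub N3).
    exists (set_val @^-1` W); split; first by exists W.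
    apply/funext => k; apply/propext; split.
      case=> x Ux <-; split; last by exists x.
      have [phi [Aphi phix phiU]] := bump oU Ux.
      exists phi; split => //; rewrite pij // phix; lra.
    case=> -[phi [Aphi phiU php]] [x _ jxk]; exists x => //.
    apply: contrapT => nUx; move: php; rewrite -jxk pij // phiU //; lra.
  - move=> O [k Ok] oO.
    have [W [oW WO]] := subsp_open oO.
    have Wk : W (set_val k) by move: Ok; rewrite -WO.
    have : K0 (set_val k) by exact: set_valP.
    move=> /(_ W (open_nbhs_nbhs (conj oW Wk))) [_ [[x _ <-] Wex]].
    exists (j x); split; last by exists x.
    by rewrite -WO.
move=> psi; split.
  move=> Apsi; exists (fun k : subsp K0 => set_val k psi); split; first exact: pic.
  by apply/funext => x; rewrite /comp pij.
case=> g [gc ->].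
have cK : compact [set: subsp K0] by exact: subsp_compact.
have [Mg HMg] := compact_bound cK gc.
apply: (hurder_of_pw S).
- by move=> x; apply: continuous_comp; [exact: jc|exact: gc].
- by exists Mg => x; exact: HMg.
move=> gam eps eps0.
apply: contrapT => nex.
pose bad := fun C : set X => [set x | ~ C x /\ eps <= `|g (j x) - g (j (a gam x))|].
have badne : forall C, compact C -> bad C !=set0.
  move=> C cC; apply: contrapT => nb; apply: nex; exists C; split => // x nCx.
  rewrite ltNge; apply/negP => le; apply: nb; exists x; split => //.
pose F := filter_from [set C : set X | compact C] bad.
have FF : Filter F.
  apply: filter_from_filter; first by exists set0; exact: compact0.
  move=> C1 C2 cC1 cC2; exists (C1 `|` C2); first exact: compactU.
  by move=> x [nC hx]; split; split => //; move=> Cx; apply: nC; [left|right].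
have PF : ProperFilter F.
  by apply: filter_from_proper => C cC; exact: badne.
have [U [UU sFU]] := ultraFilterLemma PF.
have PU : ProperFilter U by exact: ultra_proper.
have FU : Filter U by exact: PU.
have Uco : cocompact U.
  move=> C cC; apply: sFU; exists C => //.
  by move=> x [].
have Ubad : U [set x | eps <= `|g (j x) - g (j (a gam x))|].
  apply: sFU; exists set0; first exact: compact0.
  by move=> x [].
have [p jp] := ultra_lim j cK UU.
have [q jq] := ultra_lim (j \o a gam) cK UU.
have l1 : (g \o j) @ U --> g p by apply: cvg_comp jp _; exact: gc.
have l2 : (g \o (j \o a gam)) @ U --> g q by apply: cvg_comp jq _; exact: gc.
have l3 := @cvgB _ _ _ _ FU _ _ _ _ l1 l2.
have clo : closed [set t : R | eps <= `|t|].
  have H := (continuous_closedP (@Num.Def.normr R R)).1 (@norm_continuous R R^o).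
  exact: (H _ (@closed_ge R eps)).
have epq := closed_cvg _ clo Ubad _ l3.
have pq : p = q.
  apply: val_inj; apply/funext => f.
  have [Af|nAf] := pselect (A f).
    have e1 : (fun k : subsp K0 => set_val k f) \o j = f.
      by apply/funext => x; rewrite /comp pij.
    have e2 : (fun k : subsp K0 => set_val k f) \o (j \o a gam) = f \o a gam.
      by apply/funext => x; rewrite /comp pij.
    have c1 := cvg_comp _ _ jp (pic f p).
    have c2 := cvg_comp _ _ jq (pic f q).
    rewrite e1 in c1; rewrite e2 in c2.
    have c0 := hurder_shift hS gam Af FU Uco.
    apply/eqP; rewrite -subr_eq0; apply/eqP.
    exact: (norm_cvg_unique (@cvgB _ _ _ _ FU _ _ _ _ c1 c2) c0).
  have z0 : forall k : subsp K0, set_val k f = 0.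
    move=> k; have := K0box _ (set_valP k) f.
    rewrite /Mb (asboolF nAf) oppr0 /= in_itv /=.
    by move=> /andP[h1 h2]; apply/eqP; rewrite eq_le h1 h2.
  exact: (etrans (z0 p) (esym (z0 q))).
move: (epq PU); rewrite pq /= subrr normr0 => h.
by move: eps0; rewrite ltNge h.
Qed.


End Constr.


Theorem proposition4 (R : realType) (G : groupType) (X : topologicalType)
    (a : G -> X -> X) (S : seq G) :
  hausdorff_space X -> locally_compact [set: X] ->
  continuous_action a -> free_action a -> proper_action a ->
  symmetric_generating S ->
  (exists (K : topologicalType) (j : X -> K),
      compactification j /\ determined_by j (@hurder_fun R G X a S)) /\
  (forall (K : topologicalType) (j : X -> K),
    compactification j -> determined_by j (@hurder_fun R G X a S) ->
    (exists b : G -> K -> K, extends_action a j b /\ trivial_on_corona j b) /\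
    (forall (L : topologicalType) (k : X -> L) (c : G -> L -> L),
       compactification k -> extends_action a k c -> trivial_on_corona k c ->
       exists phi : K -> L, continuous phi /\ (forall x, phi (j x) = k x))).
Proof.
move=> hX lcX [hact hcont] _ _ hS.
split.
  exact: (@part1 R G X a S hS hact hcont hX lcX).
move=> K j cj dj; split.
  exact: (part2 hS hact hcont cj dj).
exact: (part3 cj dj).
Qed.
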